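(* Let $n\ge 3$ and $1\le k\le n-2$. Then $n-k-1$ is an eigenvalue of the adjacency matrix of $X[k]$ with multiplicity at least $\binom{n-2}{k}$.
   Context: $T_n=\{(1\,2),\dots,(1\,n)\}$. $X[k]$ is the Schreier coset graph $X(S_n,S'_{n-k},T_n)$, where $S'_{n-k}\le S_n$ is the subgroup fixing $n-k+1,\dots,n$ pointwise; equivalently, $X[k]$ is the multigraph whose vertices are the $k$-tuples of pairwise distinct elements of $[n]$, with, for each vertex $(i_1,\dots,i_k)$ and each $t\in T_n$, an edge joining it to $(t(i_1),\dots,t(i_k))$ (a loop if equal). Its adjacency matrix $A$ has $A_{x,y}=\#\{t\in T_n : t(x)=y\}$, where $t$ acts entrywise on tuples; in particular each loop contributes $1$ to the diagonal entry. *)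

(* Defs.v *)
From HB Require Import structures.
From mathcomp Require Import all_boot all_order all_algebra all_fingroup.
Set Implicit Arguments. Unset Strict Implicit. Unset Printing Implicit Defensive.
Import GRing.Theory Num.Theory.
Local Open Scope ring_scope.

(* [n] is modelled by 'I_n = {0,...,n-1}; the point "1" of the paper is the
   ordinal with value 0.  Vertices of X[k]: k-tuples of pairwise distinct
   elements of [n]. *)
Definition vert (n k : nat) : {set k.-tuple 'I_n} := [set t : k.-tuple 'I_n | uniq t].

(* A_{x,y} = #{ t in T_n : t(x) = y }, with T_n = {(a j) : j <> a} where a is
   the point with value 0 (the paper's point 1); t acts entrywise. *)
Definition adj_entry (n k : nat) (x y : k.-tuple 'I_n) : nat :=
  (\sum_(a : 'I_n | val a == 0%N) \sum_(j : 'I_n | val j != 0%N)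
      (map (tperm a j) x == y :> seq 'I_n))%N.

Definition adjX (n k : nat) : 'M[rat]_#|vert n k| :=
  \matrix_(i, j) (adj_entry (enum_val i : k.-tuple 'I_n) (enum_val j))%:R.

(* Main.v *)
Require Import Defs.
From HB Require Import structures.
From mathcomp Require Import all_boot all_order all_algebra all_fingroup.
From mathcomp Require Import zify.
Import GRing.Theory Num.Theory.
Set Implicit Arguments. Unset Strict Implicit. Unset Printing Implicit Defensive.

Section Key.
Local Open Scope ring_scope.
Variables (n k : nat) (z0 : 'I_n) (cv : 'I_k.+1 -> 'I_n).
Hypothesis hcv : forall c, cv c != z0.

Definition Mx (x : seq 'I_n) : 'M[rat]_k.+1 :=
  \matrix_(r, c) (if (r < k)%N then ((nth z0 x r == cv c)%:R) else 1).
Definition F x := \det (Mx x).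

Lemma detrow0 m (A : 'M[rat]_m) r : (forall c, A r c = 0) -> \det A = 0.
Proof. by move=> h; rewrite (expand_det_row _ r) big1 // => c _; rewrite h mul0r. Qed.

Lemma Fnot x (r : 'I_k.+1) : (r < k)%N -> (forall c, cv c != nth z0 x r) -> F x = 0.
Proof.
move=> rk h; apply: (@detrow0 _ _ r) => c; rewrite mxE rk.
by have := h c; rewrite eq_sym => /negbTE ->.
Qed.

Lemma cofactor_eq m (A B : 'M[rat]_m) i :
  (forall r, r != i -> forall c, A r c = B r c) -> forall c, cofactor A i c = cofactor B i c.
Proof.
move=> h c; rewrite /cofactor; congr (_ * _); congr (\det _).
by apply/matrixP => r c'; rewrite !mxE h // eq_sym neq_lift.
Qed.

Lemma Fin (y : k.-tuple 'I_n) j : j \in y -> F (map (tperm z0 j) y) = 0.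
Proof.
move=> jy; have ik : (index j y < k)%N by move: jy; rewrite -index_mem size_tuple.
apply: (@Fnot _ (Ordinal (leqW ik))) => //= c.
by rewrite (nth_map z0) ?size_tuple // nth_index // tpermR.
Qed.

Lemma sum_nth_eq (y : k.-tuple 'I_n) a : uniq y ->
  \sum_(r < k) ((nth z0 y r == a)%:R : rat) = (a \in y)%:R.
Proof.
move=> uy; case: (boolP (a \in y)) => ay.
  have ik : (index a y < k)%N by move: ay; rewrite -index_mem size_tuple.
  rewrite (bigD1 (Ordinal ik)) //= nth_index // eqxx big1 ?addr0 // => r rne.
  rewrite -(nth_index z0 ay) nth_uniq ?size_tuple //.
  by case: eqP => // h; move: rne; rewrite -val_eqE /= h eqxx.
rewrite big1 // => r _; case: eqP => // h.
by move: ay; rewrite -h mem_nth ?size_tuple.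
Qed.

Lemma key (y : k.-tuple 'I_n) : uniq y ->
  \sum_(j | j != z0) F (map (tperm z0 j) y) = ((n - k - 1)%N)%:R * F y.
Proof.
move=> uy; have sy : size y = k := size_tuple y.
rewrite (bigID (fun j => j \in y)) /= big1 ?add0r; last by move=> j /andP[_ jy]; exact: Fin.
case: (boolP (z0 \in y)) => hz.
  set i := index z0 y.
  have ik : (i < k)%N by move: hz; rewrite -index_mem sy.
  have nyi : nth z0 y i = z0 := nth_index _ hz.
  pose ii : 'I_k.+1 := Ordinal (leqW ik).
  have -> : F y = 0.
    by apply: (@Fnot _ ii) => //= c; rewrite nyi.
  rewrite mulr0.
  have E : forall j, j != z0 -> j \notin y -> F (map (tperm z0 j) y) =
      \sum_c (j == cv c)%:R * cofactor (Mx y) ii c.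
    move=> j jz jy; rewrite /F (expand_det_row _ ii); apply: eq_bigr => c _.
    rewrite (@cofactor_eq _ _ (Mx y)); last first.
      move=> r rne c'; rewrite !mxE; case: ifP => // rk.
      rewrite (nth_map z0) ?sy // tpermD //.
        rewrite eq_sym; apply/negP => /eqP h.
        move: rne; rewrite -val_eqE /= -[val r]/(nat_of_ord r).
        by move/eqP: h; rewrite -{2}nyi nth_uniq ?sy // => /eqP ->; rewrite eqxx.
      by apply: contraNneq jy => ->; rewrite mem_nth ?sy.
    by rewrite !mxE /= ik (nth_map z0) ?sy // nyi tpermL.
  rewrite (eq_bigr (fun j => \sum_c (j == cv c)%:R * cofactor (Mx y) ii c)); last first.
    by move=> j /andP[a b]; exact: E.
  rewrite exchange_big /=.
  pose N : 'M[rat]_k.+1 := \matrix_(r, c) (if r == ii then (cv c \notin y)%:R else Mx y r c).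
  have -> : \sum_c \sum_(j | (j != z0) && (j \notin y)) (j == cv c)%:R * cofactor (Mx y) ii c
      = \det N.
    rewrite (expand_det_row _ ii); apply: eq_bigr => c _.
    rewrite -mulr_suml mxE eqxx (@cofactor_eq _ N (Mx y)); last first.
      by move=> r rne c'; rewrite mxE (negbTE rne).
    congr (_ * _); case: (boolP (cv c \notin y)) => cy.
      rewrite (bigD1 (cv c)) /= ?hcv ?cy // eqxx big1 ?addr0 // => j /andP[_ jne].
      by rewrite (negbTE jne).
    rewrite big1 // => j /andP[_ jy]; case: eqP => // h.
    by move: cy jy; rewrite h negbK => ->.
  apply/eqP/det0P.
  exists (\row_(r < k.+1) (if (r < k)%N then 1 else -1 : rat)).
    apply/negP => /eqP /matrixP /(_ 0 ord_max); rewrite !mxE ltnn => /eqP.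
    by rewrite oppr_eq0 oner_eq0.
  apply/matrixP => z c; rewrite !mxE big_ord_recr /=.
  have -> : (\row_(r < k.+1) (if (r < k)%N then 1 else -1 : rat)) z ord_max * N ord_max c = -1.
    rewrite !mxE ltnn; case: ifP => [/eqP h|_]; last by rewrite mulr1.
    by have := ik; rewrite -[i]/(val ii) -h /= ltnn.
  have -> : \sum_(r < k) (\row_(r0 < k.+1) (if (r0 < k)%N then 1 else -1 : rat)) z (widen_ord (leqnSn k) r) * N (widen_ord (leqnSn k) r) c
     = \sum_(r < k) (((nth z0 y r == cv c)%:R : rat) + (r == Ordinal ik)%:R * (cv c \notin y)%:R).
    apply: eq_bigr => r _; rewrite !mxE /= ltn_ord mul1r.
    have -> : (widen_ord (leqnSn k) r == ii) = (r == Ordinal ik) by rewrite -!val_eqE.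
    case: eqP => [-> | _]; last by rewrite mul0r addr0.
    by rewrite /= nyi eq_sym (negbTE (hcv c)) add0r mul1r.
  rewrite big_split /= sum_nth_eq // (bigD1 (Ordinal ik)) //= eqxx mul1r big1 ?addr0.
    by case: (cv c \in y); rewrite /= ?addr0 ?add0r subrr.
  by move=> r /negbTE ->; rewrite mul0r.
have E : forall j, (j != z0) && (j \notin y) -> F (map (tperm z0 j) y) = F y.
  move=> j /andP[jz jy]; congr F; apply: map_id_in => v vy; apply: tpermD.
    by apply: contraNneq hz => ->.
  by apply: contraNneq jy => ->.
rewrite (eq_bigr (fun=> F y)) // sumr_const mulr_natl; congr (_ *+ _).
have -> : #|(fun j : 'I_n => (j != z0) && (j \notin y))| = #|~: (z0 |: [set v in y])|.
  by apply: eq_card => j; rewrite !inE negb_or.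
have := cardsC (z0 |: [set v in y]); rewrite cardsU1 inE hz cardsE card_ord.
move/card_uniqP: uy; rewrite sy => ->; lia.
Qed.
End Key.
Section Main.
Local Open Scope ring_scope.
Variables (n k : nat) (z0 o1 : 'I_n).
Hypotheses (hz0 : val z0 = 0%N) (ho1 : val o1 = 1%N).

Lemma sum_pick (G : k.-tuple 'I_n -> rat) (t : k.-tuple 'I_n) : t \in vert n k ->
  \sum_(x < #|vert n k|) G (enum_val x) * ((enum_val x == t)%:R) = G t.
Proof.
move=> ht; rewrite -(big_enum_val (fun x => G x * (x == t)%:R)) /=.
rewrite (bigD1 t) //= eqxx mulr1 big1 ?addr0 // => x /andP[_ /negbTE ->].
by rewrite mulr0.
Qed.

Lemma map_tperm_eq j (x y : k.-tuple 'I_n) :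
  (map (tperm z0 j) x == y :> seq 'I_n) = (x == map_tuple (tperm z0 j) y).
Proof.
apply/eqP/eqP => h.
  by apply: val_inj; rewrite /= -h mapK //; exact: tpermK.
by rewrite h /= mapK //; exact: tpermK.
Qed.

Lemma eigrow (cv : 'I_k.+1 -> 'I_n) : (forall c, cv c != z0) ->
  (\row_(j < #|vert n k|) F z0 cv (enum_val j)) *m adjX n k =
  ((n - k - 1)%N)%:R *: (\row_(j < #|vert n k|) F z0 cv (enum_val j)).
Proof.
move=> hcv; apply/matrixP => z y'; rewrite !mxE.
have uy : uniq (enum_val y').
  by have := enum_valP y'; rewrite inE.
rewrite -(key hcv uy).
have -> : \sum_(j | j != z0) F z0 cv [seq tperm z0 j i | i <- enum_val y'] =
   \sum_(j | val j != 0%N) \sum_(x < #|vert n k|) F z0 cv (enum_val x) *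
       ((enum_val x == map_tuple (tperm z0 j) (enum_val y'))%:R).
  apply: eq_big => [j|j _]; first by rewrite -hz0 val_eqE.
  rewrite (sum_pick (F z0 cv)) //; rewrite inE map_inj_uniq //; exact: perm_inj.
rewrite [RHS]exchange_big /=; apply: eq_bigr => x _; rewrite !mxE /adj_entry.
rewrite (big_pred1 z0); last by move=> a /=; rewrite -hz0 val_eqE.
rewrite natr_sum mulr_sumr; apply: eq_bigr => j _.
by rewrite map_tperm_eq.
Qed.

Definition Gs : {set 'I_n} := [set v : 'I_n | (2 <= v)%N].
Definition Ds : {set {set 'I_n}} := [set S : {set 'I_n} | (S \subset Gs) && (#|S| == k)].
Definition cvS (S : {set 'I_n}) (c : 'I_k.+1) : 'I_n := nth o1 (o1 :: enum S) c.

Lemma nth_in_cons (T : eqType) (s : seq T) x0 i : nth x0 (x0 :: s) i \in x0 :: s.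
Proof.
case: i => [|i]; first exact: mem_head.
case: (ltnP i (size s)) => h /=; first by rewrite inE mem_nth ?orbT.
by rewrite nth_default ?mem_head.
Qed.

Lemma cvS_in (S : {set 'I_n}) (c : 'I_k.+1) : S \subset Gs -> cvS S c = o1 \/ (2 <= cvS S c)%N.
Proof.
move=> sG; have := nth_in_cons (enum S) o1 c; rewrite -/(cvS S c) inE => /orP[/eqP -> | ]; first by left.
by rewrite mem_enum => /(subsetP sG); rewrite inE; right.
Qed.

Lemma hcvS (S : {set 'I_n}) (c : 'I_k.+1) : S \subset Gs -> cvS S c != z0.
Proof.
move=> sG; rewrite -val_eqE hz0; case: (cvS_in c sG) => [->|h]; first by rewrite ho1.
by rewrite -lt0n (leq_trans _ h).
Qed.

Lemma offdiag (S T : {set 'I_n}) : S \in Ds -> T \in Ds -> S != T -> F z0 (cvS S) (enum T) = 0.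
Proof.
rewrite !inE => /andP[sG /eqP cS] /andP[tG /eqP cT] ST.
have : ~~ (T \subset S).
  by apply: contra ST => TS; rewrite eq_sym eqEcard TS cS cT leqnn.
case/subsetPn => t tT tS.
have tk : (index t (enum T) < k)%N by rewrite -cT cardE index_mem mem_enum.
apply: (Fnot (r := Ordinal (leqW tk))) => //= c.
rewrite nth_index ?mem_enum //.
have := nth_in_cons (enum S) o1 c; rewrite -/(cvS S c) inE => /orP[/eqP -> | hS].
  by apply/negP => /eqP h; move: (subsetP tG t tT); rewrite inE -h ho1.
by rewrite mem_enum in hS; apply: contraNneq tS => <-.
Qed.

Lemma diag (S : {set 'I_n}) : S \in Ds -> F z0 (cvS S) (enum S) != 0.
Proof.
rewrite inE => /andP[sG /eqP cS].
have sz : size (enum S) = k by rewrite -cardE.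
have o1S : o1 \notin enum S.
  by rewrite mem_enum; apply/negP => /(subsetP sG); rewrite inE ho1.
apply/negP => /det0P [v vn0 hv]; apply: (negP vn0); apply/eqP.
have col : forall c, \sum_(r < k) v 0 (widen_ord (leqnSn k) r) *
     ((nth z0 (enum S) r == cvS S c)%:R) + v 0 ord_max = 0.
  move=> c; have := congr1 (fun M : 'M[rat]_(1,k.+1) => M 0 c) hv; rewrite !mxE big_ord_recr /= !mxE ltnn mulr1.
  move=> h; rewrite -[RHS]h; congr (_ + _); apply: eq_bigr => r _; by rewrite /Mx mxE (ltn_ord r).
have vmax : v 0 ord_max = 0.
  have := col ord0; rewrite big1 ?add0r // => r _.
  rewrite /cvS /=; case: eqP; rewrite ?mulr0 // => h.
  by move: o1S; rewrite -h mem_nth ?sz.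
apply/matrixP => z r; rewrite ord1 mxE.
case: (eqVneq (val r) k) => [rk|rk].
  by rewrite (_ : r = ord_max) //; apply: val_inj.
have rk' : (r < k)%N by have := ltn_ord r; rewrite ltnS leq_eqVlt (negbTE rk).
have rk1 : (r.+1 < k.+1)%N by rewrite ltnS.
have := col (Ordinal rk1); rewrite vmax addr0 (bigD1 (Ordinal rk')) //= big1 ?addr0.
  rewrite /cvS /= (set_nth_default z0) ?sz // eqxx mulr1 => <-.
  by congr (v 0 _); apply: val_inj.
move=> t tn; rewrite /cvS /= (set_nth_default z0) ?sz // nth_uniq ?sz ?enum_uniq //.
by rewrite -val_eqE /= in tn; rewrite (negbTE tn) mulr0.
Qed.
End Main.

Section Final.
Local Open Scope ring_scope.
Lemma main_aux (n k : nat) :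
  (3 <= n)%N -> (1 <= k)%N -> (k <= n - 2)%N ->
  ('C(n - 2, k) <= \rank (eigenspace (adjX n k) ((n - k - 1)%N)%:R))%N.
Proof.
move=> n3 k1 kn.
have n0 : (0 < n)%N by lia.
have n1 : (1 < n)%N by lia.
pose z0 : 'I_n := Ordinal n0; pose o1 : 'I_n := Ordinal n1.
have hz0 : val z0 = 0%N by []. have ho1 : val o1 = 1%N by [].
pose W : 'M[rat]_(#|Ds n k|, #|vert n k|) :=
  \matrix_(i < #|Ds n k|, j < #|vert n k|) F z0 (@cvS n k o1 (enum_val i)) (enum_val j).
pose xt (S : {set 'I_n}) : k.-tuple 'I_n := insubd (nseq_tuple k z0) (enum S).
pose P : 'M[rat]_(#|vert n k|, #|Ds n k|) :=
  \matrix_(j < #|vert n k|, i < #|Ds n k|) ((enum_val j == xt (enum_val i))%:R).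
have xtE : forall S, S \in Ds n k -> val (xt S) = enum S.
  by move=> S; rewrite inE => /andP[_ /eqP cS]; rewrite val_insubd -cardE cS eqxx.
have xtV : forall S, S \in Ds n k -> xt S \in vert n k.
  by move=> S hS; rewrite inE xtE // enum_uniq.
have WP : forall (i i' : 'I_#|Ds n k|), (W *m P) i i' = F z0 (@cvS n k o1 (enum_val i)) (enum (enum_val i')).
  move=> i i'; rewrite !mxE.
  rewrite (eq_bigr (fun j : 'I_#|vert n k| => F z0 (@cvS n k o1 (enum_val i)) (enum_val j) *
       (enum_val j == xt (enum_val i'))%:R)); last by move=> j _; rewrite !mxE.
  by rewrite (sum_pick (F z0 (@cvS n k o1 (enum_val i)))) ?xtE ?xtV // enum_valP.
have dWP : \det (W *m P) != 0.
  apply/negP => /det0P [v vn0 hv]; apply: (negP vn0); apply/eqP/matrixP => z i'.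
  rewrite ord1 mxE.
  have := congr1 (fun M : 'M[rat]_(1, #|Ds n k|) => M 0 i') hv; rewrite !mxE (bigD1 i') //= big1 ?addr0.
    by rewrite WP => /eqP; rewrite mulf_eq0 (negbTE (@diag n k z0 o1 ho1 _ (enum_valP i'))) orbF => /eqP.
  move=> i ii; rewrite WP (offdiag z0 ho1 (enum_valP i) (enum_valP i')) ?mulr0 //.
  by apply: contraNneq ii => /enum_val_inj ->.

have rWP : \rank (W *m P) = #|Ds n k| by apply: mxrank_unit; rewrite unitmxE unitfE.
have sub : (W <= eigenspace (adjX n k) ((n - k - 1)%N)%:R)%MS.
  apply/row_subP => i; apply/eigenspaceP.
  have -> : row i W = \row_(j < #|vert n k|) F z0 (@cvS n k o1 (enum_val i)) (enum_val j).
    by apply/matrixP => ? ?; rewrite !mxE.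
  apply: eigrow => // c; apply: hcvS => //.
  by have := enum_valP i; rewrite inE => /andP[].
have cG : #|Gs n| = (n - 2)%N.
  have -> : Gs n = ~: [set z0; o1].
    apply/setP => v; rewrite !inE -!val_eqE /=.
    by case: (val v) => [|[|m]].
  have := cardsC [set z0; o1]; rewrite cards2 card_ord.
  have -> : (z0 != o1) by rewrite -val_eqE.
  by move=> /= h; apply/eqP; rewrite -(eqn_add2l 2) h subnKC //; apply: ltnW.
have -> : 'C(n - 2, k) = #|Ds n k| by rewrite /Ds cards_draws cG.
apply: leq_trans (mxrankS sub); have := mxrankM_maxl W P; by rewrite rWP.
Qed.
End Final.

Theorem mainTheorem10 (n k : nat) :
  (3 <= n)%N -> (1 <= k)%N -> (k <= n - 2)%N ->
  ('C(n - 2, k) <= \rank (eigenspace (adjX n k) (n - k - 1)%:R))%N.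
Proof. exact: main_aux. Qed.
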